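(* Let $E$ and $F$ be complex Banach spaces, let $A_m:\mathrm{dom}(A_m)\subseteq E\to E$ and $B:\mathrm{dom}(B)\subseteq F\to F$ be linear operators, and let $L:\mathrm{dom}(A_m)\to F$ be linear, surjective and bounded with respect to the graph norm of $A_m$. Assume that the restriction $A_0$ of $A_m$ to $\ker(L)$ generates a strongly continuous semigroup $(T_0(t))_{t\ge0}$ on $E$, that $B$ generates a strongly continuous semigroup $(S(t))_{t\ge0}$ on $F$, that $x\mapsto(A_mx,Lx)$, $\mathrm{dom}(A_m)\to E\times F$, is closed, and that $A_0$ and $B$ are boundedly invertible. Let $D_0:=(L|_{\ker(A_m)})^{-1}:F\to E$. For $y\in\mathrm{dom}(B)$ and $t\ge0$ let $Q(t)y=D_0S(t)y-T_0(t)D_0y-\int_0^tT_0(t-s)D_0S(s)By\,\mathrm{d}s$, and assume that each $Q(t)$ extends to a bounded operator $F\to E$ with $\limsup_{t\downarrow0}\|Q(t)\|<\infty$; let $(\mathcal{T}(t))_{t\ge0}$ be the $C_0$-semigroup on $E\times F$ given by $\mathcal{T}(t)=\begin{pmatrix}T_0(t)&Q(t)\\0&S(t)\end{pmatrix}$. For each $\tau>0$ let $V(\tau):\mathrm{dom}(B)\to E$ be a linear operator, put $\mathbb{T}(\tau)=\begin{pmatrix}T_0(\tau)&V(\tau)\\0&S(\tau)\end{pmatrix}$ acting on $E\times\mathrm{dom}(B)$, and let $V_k(\tau)=\sum_{j=0}^{k-1}T_0((k-1-j)\tau)V(\tau)S(j\tau)$ for $k\in\mathbb{N}$. Let $\mathcal{R}_0=\begin{pmatrix}I&-D_0\\0&I\end{pmatrix}$.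 Let $y\in\mathrm{dom}(B)$ and suppose that \[ \lim_{n\to\infty}V_n(\tfrac tn)y=-\int_0^tT_0(t-s)D_0S(s)By\,\mathrm{d}s \] uniformly for $t$ in compact subsets of $[0,\infty)$. Then for every $x\in E$ and every $t_{\max}>0$, \[ \lim_{n\to\infty}\mathcal{R}_0^{-1}\mathbb{T}(\tfrac tn)^n\mathcal{R}_0\binom{x}{y}=\mathcal{T}(t)\binom{x}{y} \] uniformly for $t\in[0,t_{\max}]$.
   Context: Under the stated assumptions $D_0$ is bounded, and the semigroup $(\mathcal{T}(t))_{t\ge0}$ is the one generated by the operator $\mathrm{diag}(A_m,B)$ on $E\times F$ with domain $\{(x,y)\in\mathrm{dom}(A_m)\times\mathrm{dom}(B):Lx=y\}$. Here $\mathcal{R}_0^{-1}=\begin{pmatrix}I&D_0\\0&I\end{pmatrix}$. *)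

(* Defs.v *)
From HB Require Import structures.
From mathcomp Require Import all_boot all_order all_algebra.
From mathcomp Require Import all_classical all_reals all_analysis.
From mathcomp.real_closed Require Import complex.
Set Implicit Arguments. Unset Strict Implicit. Unset Printing Implicit Defensive.
Import Order.TTheory GRing.Theory Num.Theory.
Import numFieldNormedType.Exports.
Local Open Scope classical_set_scope.
Local Open Scope ring_scope.
Local Open Scope complex_scope.

Section Defs.
Variable R : realType.
Local Notation C := R[i].

Definition lin_subspace (U : lmodType C) (D : set U) : Prop :=
  D 0 /\ forall (a : C) x y, D x -> D y -> D (a *: x + y).

Definition linear_on (U W : lmodType C) (D : set U) (f : U -> W) : Prop :=
  forall (a : C) x y, D x -> D y -> f (a *: x + y) = a *: f x + f y.

Definition bounded_op (U W : normedModType C) (f : U -> W) : Prop :=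
  linear_on setT f /\ exists c : R, forall x, `|f x| <= c%:C * `|x|.

Definition C0_semigroup (E : normedModType C) (T : R -> E -> E) : Prop :=
  [/\ forall t, 0 <= t -> bounded_op (T t),
      forall x, T 0 x = x,
      forall s t x, 0 <= s -> 0 <= t -> T (s + t) x = T s (T t x) &
      forall x, T t x @[t --> 0^'+] --> x].

Definition generates (E : normedModType C) (D : set E) (A : E -> E)
  (T : R -> E -> E) : Prop :=
  C0_semigroup T /\
  forall x v, (D x /\ A x = v) <->
     ((h^-1)%:C *: (T h x - x) @[h --> 0^'+] --> v).

Definition boundedly_invertible (E : normedModType C) (D : set E)
  (A : E -> E) : Prop :=
  exists Ainv : E -> E, [/\ bounded_op Ainv,
     forall z, D (Ainv z) /\ A (Ainv z) = z &
     forall x, D x -> Ainv (A x) = x].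

Definition is_RiemannInt (E : normedModType C) (f : R -> E) (a b : R)
  (v : E) : Prop :=
  forall eps : R, 0 < eps -> exists2 delta : R, 0 < delta &
    forall (n : nat) (p xi : nat -> R),
      p 0%N = a -> p n = b ->
      (forall i, (i < n)%N -> p i <= xi i <= p i.+1 /\ p i.+1 - p i < delta) ->
      `|\sum_(i < n) ((p i.+1 - p i)%:C *: f (xi i)) - v| < eps%:C.

Definition Vk (E F : lmodType C) (T0 : R -> E -> E) (V : R -> F -> E)
  (S : R -> F -> F) (k : nat) (tau : R) (y : F) : E :=
  \sum_(j < k) T0 ((k - 1 - j)%:R * tau) (V tau (S (j%:R * tau) y)).

Definition TTmat (E F : lmodType C) (T0 : R -> E -> E) (V : R -> F -> E)
  (S : R -> F -> F) (tau : R) (p : E * F) : E * F :=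
  (T0 tau p.1 + V tau p.2, S tau p.2).

Definition R0 (E F : lmodType C) (D0 : F -> E) (p : E * F) : E * F :=
  (p.1 - D0 p.2, p.2).
Definition R0inv (E F : lmodType C) (D0 : F -> E) (p : E * F) : E * F :=
  (p.1 + D0 p.2, p.2).

Definition calT (E F : lmodType C) (T0 : R -> E -> E) (Q : R -> F -> E)
  (S : R -> F -> F) (t : R) (p : E * F) : E * F :=
  (T0 t p.1 + Q t p.2, S t p.2).

End Defs.

(* Main.v *)
Require Import Defs.
From HB Require Import structures.
From mathcomp Require Import all_boot all_order all_algebra.
From mathcomp Require Import all_classical all_reals all_analysis.
From mathcomp.real_closed Require Import complex.
Import Order.TTheory GRing.Theory Num.Theory.
Import numFieldNormedType.Exports.
Local Open Scope classical_set_scope.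
Local Open Scope ring_scope.
Local Open Scope complex_scope.

From mathcomp Require Import zify.
Section H.
Variable R : realType.

Lemma lin0 (U W : lmodType R[i]) (f : U -> W) : linear_on setT f -> f 0 = 0.
Proof.
move=> hf; have := hf 1 0 0 I I; rewrite !scale1r addr0 => h.
by apply: (addrI (f 0)); rewrite addr0 -h.
Qed.

Lemma linD (U W : lmodType R[i]) (f : U -> W) u v : linear_on setT f -> f (u + v) = f u + f v.
Proof. by move=> hf; rewrite -[u]scale1r hf // !scale1r. Qed.

Lemma linB (U W : lmodType R[i]) (f : U -> W) u v : linear_on setT f -> f (u - v) = f u - f v.
Proof.
move=> hf; rewrite addrC -scaleN1r hf // scaleN1r addrC //.
Qed.

Lemma linsum (U W : lmodType R[i]) (f : U -> W) k (G : 'I_k -> U) : linear_on setT f ->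
  f (\sum_(j < k) G j) = \sum_(j < k) f (G j).
Proof.
move=> hf; elim: k G => [|k IH] G; first by rewrite !big_ord0 lin0.
by rewrite !big_ord_recr /= linD // IH.
Qed.

Lemma zmodid (Z : zmodType) (a b c d e : Z) :
  a - b + c + d - (a + e) = c + (d - b - e).
Proof.
rewrite opprD addrA [RHS]addrA; congr (_ - _).
rewrite addrC !addrA addNr add0r.
by rewrite -addrA addrC.
Qed.

Lemma norm_lt_all0 (E : normedModType R[i]) (w : E) :
  (forall eps : R, 0 < eps -> `|w| < eps%:C) -> w = 0.
Proof.
move=> h; apply/eqP; apply/negPn/negP => hw.
have hr : `|w| \is Num.real by apply: normr_real.
have hpos : 0 < complex.Re `|w| by rewrite -ltcR RRe_real // normr_gt0.
by have := h _ hpos; rewrite RRe_real // ltxx.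
Qed.
End H.

Section H2.
Variable R : realType.
Lemma riem_uniq (E : normedModType R[i]) (f : R -> E) t v1 v2 : 0 <= t ->
  is_RiemannInt f 0 t v1 -> is_RiemannInt f 0 t v2 -> v1 = v2.
Proof.
move=> t0 h1 h2; apply/eqP; rewrite -subr_eq0; apply/eqP; apply: norm_lt_all0 => eps e0.
have e2 : 0 < eps / 2 by rewrite divr_gt0.
have [d1 d10 H1] := h1 _ e2; have [d2 d20 H2] := h2 _ e2.
pose d := Num.min d1 d2.
have d0 : 0 < d by rewrite lt_min d10 d20.
pose m := Num.bound (t / d).
have hm : t / d < m%:R by apply: archi_boundP; rewrite divr_ge0 // ltW.
have m0 : (0 < m)%N.
  rewrite lt0n; apply/negP => /eqP m0; move: hm; rewrite m0 ltNge divr_ge0 // ltW //.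
have mR0 : (m%:R : R) != 0 by rewrite pnatr_eq0 -lt0n.
pose p i := i%:R * (t / m%:R).
have dp : forall i, p i.+1 - p i = t / m%:R.
  by move=> i; rewrite /p mulrS mulrDl mul1r addrK.
have Hp : forall i, (i < m)%N -> p i <= p i <= p i.+1 /\ p i.+1 - p i < d.
  move=> i _; rewrite lexx /= -subr_ge0 dp divr_ge0 //; split => //.
  by rewrite ltr_pdivrMr ?ltr0n // mulrC -ltr_pdivrMr.
have p0 : p 0%N = 0 by rewrite /p mul0r.
have pm : p m = t by rewrite /p mulrC divfK.
have Hp1 : forall i, (i < m)%N -> p i <= p i <= p i.+1 /\ p i.+1 - p i < d1.
  by move=> i /Hp [-> h]; split => //; apply: (lt_le_trans h); rewrite ge_min lexx.
have Hp2 : forall i, (i < m)%N -> p i <= p i <= p i.+1 /\ p i.+1 - p i < d2.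
  by move=> i /Hp [-> h]; split => //; apply: (lt_le_trans h); rewrite ge_min lexx orbT.
have := H1 m p p p0 pm Hp1; have := H2 m p p p0 pm Hp2.
set s := \sum_(i < m) _ => g2 g1.
have -> : v1 - v2 = (v1 - s) + (s - v2) by rewrite addrA subrK.
apply: (le_lt_trans (ler_normD _ _)); rewrite distrC.
by rewrite [eps]splitr raddfD /= ltrD.
Qed.
End H2.

Section H3.
Variable R : realType.
Lemma iterTT (E F : lmodType R[i]) (T0 : R -> E -> E) (V : R -> F -> E)
  (S : R -> F -> F) tau u y :
 0 <= tau ->
 (forall t, 0 <= t -> linear_on setT (T0 t)) ->
 (forall x, T0 0 x = x) ->
 (forall s t x, 0 <= s -> 0 <= t -> T0 (s + t) x = T0 s (T0 t x)) ->
 (forall x, S 0 x = x) ->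
 (forall s t x, 0 <= s -> 0 <= t -> S (s + t) x = S s (S t x)) ->
 forall k, iter k (TTmat T0 V S tau) (u, y) =
   (T0 (k%:R * tau) u + Vk T0 V S k tau y, S (k%:R * tau) y).
Proof.
move=> tau0 hl h0 hs s0 ss; elim=> [|k IH].
  by rewrite /= /Vk big_ord0 mul0r h0 s0 addr0.
have kt0 : 0 <= k%:R * tau by rewrite mulr_ge0 ?ler0n.
have e : k.+1%:R * tau = tau + k%:R * tau by rewrite mulrS mulrDl mul1r.
rewrite iterS IH /TTmat /= e -ss //; congr pair.
rewrite linD; last exact: hl.
rewrite -hs // -addrA; congr (_ + _).
rewrite /Vk big_ord_recr /= linsum ?hl //.
have -> : (k.+1 - 1 - k = 0)%N by lia.
rewrite mul0r h0; congr (_ + _); apply: eq_bigr => j _.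
rewrite -hs ?mulr_ge0 ?ler0n //; congr T0.
have -> : (k.+1 - 1 - j = (k - 1 - j).+1)%N by have := ltn_ord j; lia.
by rewrite mulrS mulrDl mul1r.
exact: hl.
Qed.
End H3.

Theorem proposition3p4 (R : realType)
  (E F : completeNormedModType R[i])
  (domAm : set E) (Am : E -> E) (domB : set F) (B : F -> F) (L : E -> F)
  (T0 : R -> E -> E) (S : R -> F -> F) (D0 : F -> E) (Q : R -> F -> E)
  (V : R -> F -> E) :
  (* A_m, B linear operators; L linear, surjective, graph-norm bounded *)
  lin_subspace domAm -> linear_on domAm Am ->
  lin_subspace domB -> linear_on domB B ->
  linear_on domAm L ->
  (forall y, exists2 x, domAm x & L x = y) ->
  (exists c : R, forall x, domAm x -> `|L x| <= c%:C * (`|x| + `|Am x|)) ->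
  (* A_0 := A_m restricted to ker L generates T0; B generates S *)
  generates [set x | domAm x /\ L x = 0] Am T0 ->
  generates domB B S ->
  (* x |-> (A_m x, L x) is closed *)
  closed [set p : E * (E * F) | exists2 x, domAm x & p = (x, (Am x, L x))] ->
  (* A_0 and B boundedly invertible *)
  boundedly_invertible [set x | domAm x /\ L x = 0] Am ->
  boundedly_invertible domB B ->
  (* D0 = (L restricted to ker A_m)^{-1} *)
  (forall y, [/\ domAm (D0 y), Am (D0 y) = 0 & L (D0 y) = y]) ->
  (* Q(t) y = D0 S(t) y - T0(t) D0 y - int_0^t T0(t-s) D0 S(s) B y ds on dom B *)
  (forall t y, 0 <= t -> domB y ->
     is_RiemannInt (fun s => T0 (t - s) (D0 (S s (B y)))) 0 t
       (D0 (S t y) - T0 t (D0 y) - Q t y)) ->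
  (* each Q(t) is (extends to) a bounded operator F -> E *)
  (forall t, 0 <= t -> bounded_op (Q t)) ->
  (* limsup_{t -> 0+} ||Q(t)|| < oo *)
  (exists M delta : R, 0 < delta /\
     forall t y, 0 < t < delta -> `|Q t y| <= M%:C * `|y|) ->
  (* V(tau) : dom(B) -> E linear, tau > 0 *)
  (forall tau, 0 < tau -> linear_on domB (V tau)) ->
  forall y, domB y ->
  (* V_n(t/n) y -> - int_0^t T0(t-s) D0 S(s) B y ds, uniformly on compacts *)
  (exists I : R -> E,
     (forall t, 0 <= t ->
        is_RiemannInt (fun s => T0 (t - s) (D0 (S s (B y)))) 0 t (I t)) /\
     (forall K : set R, compact K -> K `<=` [set t | 0 <= t] ->
        forall eps : R, 0 < eps -> exists N : nat, forall n : nat, (N <= n)%N ->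
          forall t, K t -> `|Vk T0 V S n (t / n%:R) y + I t| < eps%:C)) ->
  (* conclusion *)
  forall (x : E) (tmax : R), 0 < tmax ->
  forall eps : R, 0 < eps -> exists N : nat, forall n : nat, (N <= n)%N ->
    forall t, 0 <= t <= tmax ->
      let p := R0inv D0 (iter n (TTmat T0 V S (t / n%:R)) (R0 D0 (x, y))) in
      let q := calT T0 Q S t (x, y) in
      `|p.1 - q.1| < eps%:C /\ `|p.2 - q.2| < eps%:C.

Proof.
move=> _ _ _ _ _ _ _ [[T0b T0id T0s _] _] [[Sb Sid Ss _] _] _ _ _ _ HQ _ _ _ y Hy.
move=> [I [HI Hconv]] x tmax tm0 eps e0.
have T0l : forall t, 0 <= t -> linear_on setT (T0 t) by move=> t /T0b [].
have sub : `[0, tmax] `<=` [set t | 0 <= t].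
  by move=> s; rewrite /= in_itv /= => /andP[].
have [N HN] := Hconv `[0, tmax]%classic (@segment_compact _ 0 tmax) sub eps e0.
exists (maxn N 1) => n Hn t /andP[t0 ttm]; cbv zeta.
have n0 : (0 < n)%N by move: Hn; rewrite geq_max => /andP[_].
have nR0 : (n%:R : R) != 0 by rewrite pnatr_eq0 -lt0n.
have tau0 : 0 <= t / n%:R by rewrite divr_ge0.
rewrite /R0 /= iterTT // /R0inv /calT /=.
rewrite mulrC divfK //; split.
  rewrite [T0 t (x - D0 y)]linB; last exact: T0l.
  rewrite zmodid.
  have hI := HI t t0; have hQ := HQ t y t0 Hy.
  rewrite (@riem_uniq R E _ t _ _ t0 hQ hI).
  apply: HN; first by move: Hn; rewrite geq_max => /andP[].
  by rewrite /= in_itv /= t0 ttm.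
by rewrite subrr normr0 ltcE /= eqxx e0.
Qed.
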